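(* Let $B=T(B_1)/\langle R\rangle$ be a connected graded $\Bbbk$-algebra generated in degree one, with $\dim B_1=3$ and with a three-dimensional space $R\subseteq B_1\otimes B_1$ of quadratic relations, and suppose $B$ is a right $D(S_3)$-module algebra (with $B_1$ a $D(S_3)$-submodule and $R$ a $D(S_3)$-submodule of $B_1\otimes B_1$) such that the action of $D(S_3)$ on $B$ is inner faithful. Then $B$ is not a domain. In particular, no quadratic AS regular algebra with three generators admits an inner faithful $D(S_3)$-action of this kind.
   Context: Let $\Bbbk=\mathbb{C}$ and $S_3=\langle r,s\mid r^3=s^2=e,\ srs^{-1}=r^{-1}\rangle$. The Drinfeld double $D(G)$ of a finite group $G$ has basis $\{\phi_gh\}$, multiplication $(\phi_g h)(\phi_{g'}h')=\delta_{g,hg'h^{-1}}\phi_g hh'$, comultiplication $\Delta(\phi_gh)=\sum_x\phi_xh\otimes\phi_{x^{-1}g}h$, counit $\epsilon(\phi_gh)=\delta_{g,e}$. A right $D(G)$-module algebra is a $G$-graded algebra ($A_xA_y\subseteq A_{xy}$) with a right action of $G$ by algebra automorphisms satisfying $A_x\cdot g\subseteq A_{g^{-1}xg}$, with $\phi_x$ acting as projection onto $A_x$; on $V\otimes W$ the grade of $V_x\otimes W_y$ is $xy$ and $G$ acts diagonally. An action of a Hopf algebra $H$ on a module $V$ is inner faithful if no nonzero Hopf ideal $I$ of $H$ satisfies $VI=0$. A domain is a nonzero algebra without zero divisors. *)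

(* Defs.v *)
From HB Require Import structures.
From mathcomp Require Import all_boot all_order all_algebra all_fingroup.
From mathcomp Require Import complex Rstruct.
From Stdlib Require Rdefinitions.

Set Implicit Arguments.
Unset Strict Implicit.
Unset Printing Implicit Defensive.

Import GRing.Theory.
Local Open Scope ring_scope.

Notation CC := (complex Rdefinitions.R).

Notation S3 := {perm 'I_3}.

(* An element u : DS3 is the linear combination sum_(g,h) u(g,h) phi_g h *)
Definition DS3 := {ffun S3 * S3 -> CC}.
(* D(S_3) (x) D(S_3), with u (x) v having coefficient u p * v q at (p,q) *)
Definition DS3_2 := {ffun (S3 * S3) * (S3 * S3) -> CC}.

(* (phi_g h)(phi_g' h') = delta_{g, h g' h^-1} phi_g (h h') *)
Definition dmul (a b : DS3) : DS3 :=
  [ffun p : S3 * S3 => \sum_(q : S3 * S3) \sum_(q' : S3 * S3)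
     if [&& q.1 == (q.2 * q'.1 * invg q.2)%g, q.1 == p.1 & (q.2 * q'.2)%g == p.2]
     then a q * b q' else 0].

(* Delta(phi_g h) = sum_x phi_x h (x) phi_(x^-1 g) h *)
Definition dcomul (u : DS3) : DS3_2 :=
  [ffun pq : (S3 * S3) * (S3 * S3) =>
     if pq.1.2 == pq.2.2 then u ((pq.1.1 * pq.2.1)%g, pq.1.2) else 0].

(* epsilon(phi_g h) = delta_{g,e} *)
Definition dcounit (u : DS3) : CC := \sum_(h : S3) u (1%g, h).

(* antipode S(phi_g h) = h^-1 phi_(g^-1) = phi_(h^-1 g^-1 h) h^-1 *)
Definition dantipode (u : DS3) : DS3 :=
  [ffun p : S3 * S3 => u ((invg p.2 * invg p.1 * p.2)%g, invg p.2)].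

Definition dtens (a b : DS3) : DS3_2 := [ffun pq => a pq.1 * b pq.2].

Definition dsubspace (I : DS3 -> Prop) : Prop :=
  I 0 /\ forall (c : CC) (u v : DS3), I u -> I v -> I (c *: u + v).

Definition hopf_ideal (I : DS3 -> Prop) : Prop :=
  [/\ dsubspace I,
      (forall a u, I u -> I (dmul a u) /\ I (dmul u a)),
      (* coideal: Delta(I) <= I (x) H + H (x) I and epsilon(I) = 0 *)
      (forall u, I u -> exists n (a b : 'I_n -> DS3),
          (forall k, I (a k) \/ I (b k)) /\
          dcomul u = \sum_(k < n) dtens (a k) (b k)),
      (forall u, I u -> dcounit u = 0)
    &
      (forall u, I u -> I (dantipode u))].

(* The tensor algebra T(V), V = B_1 = k^3 with basis x_0, x_1, x_2.    *)
(* An element is a formal linear combination of words in x_0,x_1,x_2. *)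
Definition nc := seq (CC * seq 'I_3).

Definition ncoef (p : nc) (w : seq 'I_3) : CC := \sum_(t <- p | t.2 == w) t.1.
Definition ncone : nc := [:: (1, [::])].
Definition ncscale (c : CC) (p : nc) : nc := [seq (c * t.1, t.2) | t <- p].
Definition ncmul (p q : nc) : nc :=
  [seq (s.1 * t.1, s.2 ++ t.2) | s <- p, t <- q].

(* V (x) V is identified with 3x3 matrices: M <-> sum_(i,j) M i j x_i (x) x_j *)
Definition ofTens (M : 'M[CC]_3) : nc :=
  [seq (M i j, [:: i; j]) | i <- enum 'I_3, j <- enum 'I_3].

(* the relation space R = span of r_0, r_1, r_2 *)
Definition lin_indep3 (r : 'I_3 -> 'M[CC]_3) : Prop :=
  forall c : 'I_3 -> CC, \sum_(k < 3) c k *: r k = 0 -> forall k, c k = 0.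

Definition inR (r : 'I_3 -> 'M[CC]_3) (M : 'M[CC]_3) : Prop :=
  exists c : 'I_3 -> CC, M = \sum_(k < 3) c k *: r k.

(* membership in the two-sided ideal <R> of T(V) *)
Definition in_rel (r : 'I_3 -> 'M[CC]_3) (p : nc) : Prop :=
  exists l : seq (nc * 'M[CC]_3 * nc),
    (forall t, t \in l -> inR r t.1.2) /\
    forall w, ncoef p w =
      ncoef (flatten [seq ncmul (ncmul t.1.1 (ofTens t.1.2)) t.2 | t <- l]) w.

Definition quad_domain (r : 'I_3 -> 'M[CC]_3) : Prop :=
  ~ in_rel r ncone /\
  forall p q, in_rel r (ncmul p q) -> in_rel r p \/ in_rel r q.

(* Right D(S_3)-module structure on V = B_1 (row vectors, right action): *)
(*   v . g     = v *m rho g    (right S_3-action),                      *)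
(*   v . phi_x = v *m P x      (projection onto the component V_x).     *)
Definition DS3_module (rho P : S3 -> 'M[CC]_3) : Prop :=
  [/\ rho 1%g = 1,
      (forall g h, rho (g * h)%g = rho g *m rho h),
      (forall x y, P x *m P y = if x == y then P x else 0),
      \sum_(x : S3) P x = 1
    & (* V_x . g <= V_(g^-1 x g) *)
      forall x g, P x *m rho g *m P (x ^ g)%g = P x *m rho g].

(* R is a D(S_3)-submodule of V (x) V (grading of V_x (x) V_y is xy, *)
(* S_3 acting diagonally). *)
Definition R_submodule (r : 'I_3 -> 'M[CC]_3) (rho P : S3 -> 'M[CC]_3) : Prop :=
  forall M, inR r M ->
    (forall g, inR r ((rho g)^T *m M *m rho g)) /\
    (forall z, inR r (\sum_(x : S3) \sum_(y : S3 | (x * y)%g == z)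
                        (P x)^T *m M *m P y)).

(* Induced action on T(V): on a word x_(i_1)...x_(i_n), apply M_k to the k-th letter *)
Fixpoint opw (Ms : seq 'M[CC]_3) (w : seq 'I_3) : nc :=
  match Ms, w with
  | M :: Ms', i :: w' => [seq (M i j * t.1, j :: t.2) | j <- enum 'I_3, t <- opw Ms' w']
  | _, _ => [:: (1, [::])]
  end.

Fixpoint gseqs (n : nat) : seq (seq S3) :=
  if n is n'.+1 then [seq x :: s | x <- enum S3, s <- gseqs n'] else [:: [::]].

(* diagonal action of g *)
Definition ncact (rho : S3 -> 'M[CC]_3) (g : S3) (p : nc) : nc :=
  flatten [seq ncscale t.1 (opw (nseq (size t.2) (rho g)) t.2) | t <- p].

(* action of phi_z: projection onto the z-graded component *)
Definition ncproj (P : S3 -> 'M[CC]_3) (z : S3) (p : nc) : nc :=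
  flatten [seq ncscale t.1
             (flatten [seq opw (map P ys) t.2 |
                        ys <- gseqs (size t.2) & (\prod_(x <- ys) x)%g == z])
          | t <- p].

(* action of u in D(S_3): p . (phi_g h) = (p . phi_g) . h *)
Definition ncactD (rho P : S3 -> 'M[CC]_3) (p : nc) (u : DS3) : nc :=
  flatten [seq ncscale (u q) (ncact rho q.2 (ncproj P q.1 p)) | q <- enum {: S3 * S3}].

(* the action of D(S_3) on B = T(V)/<R> is inner faithful: no nonzero Hopf *)
(* ideal I annihilates B, i.e. satisfies B . I = 0 (T(V) . I <= <R>).      *)
Definition inner_faithful (r : 'I_3 -> 'M[CC]_3) (rho P : S3 -> 'M[CC]_3) : Prop :=
  forall I : DS3 -> Prop, hopf_ideal I ->
    (forall (p : nc) (u : DS3), I u -> in_rel r (ncactD rho P p u)) ->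
    forall u, I u -> u = 0.

(* Main.v *)
Require Import Defs.
From HB Require Import structures.
From mathcomp Require Import all_boot all_order all_algebra all_fingroup.
From mathcomp Require Import complex Rstruct.
From mathcomp Require Import ring zify.
Set Implicit Arguments.
Unset Strict Implicit.
Unset Printing Implicit Defensive.
Import GRing.Theory Num.Theory.
Local Open Scope ring_scope.

Lemma mxtrace_pid (F : fieldType) n r : (r <= n)%N -> \tr (pid_mx r : 'M[F]_n) = r%:R.
Proof.
move=> rn; rewrite /mxtrace.
rewrite (eq_bigr (fun i : 'I_n => if (i < r)%N then 1 else 0)); last first.
  by move=> i _; rewrite mxE eqxx /=; case: (i < r)%N.
rewrite -big_mkcond /= -(big_ord_widen n (fun _ => 1) rn).
by rewrite sumr_const card_ord.
Qed.

Lemma mxtrace_idem (F : fieldType) n (A : 'M[F]_n) : A *m A = A -> \tr A = (\rank A)%:R.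
Proof.
move=> HAA.
have HA := mulmx_ebase A.
set L := col_ebase A in HA; set U := row_ebase A in HA; set p := pid_mx _ in HA.
have uL : L \in unitmx by apply: col_ebase_unit.
have uU : U \in unitmx by apply: row_ebase_unit.
have rn : (\rank A <= n)%N by exact: rank_leq_row.
have pp : p *m p = p by rewrite /p pid_mx_id // minnn.
have Hp : p *m (U *m L) *m p = p.
  have E : (L *m p *m U) *m (L *m p *m U) = L *m p *m U by rewrite HA HAA.
  move/(congr1 (fun X => invmx L *m X *m invmx U)): E; rewrite !mulmxA.
  rewrite mulVmx // mul1mx -[_ *m U *m invmx U]mulmxA mulmxV // mulmx1.
  rewrite -[_ *m U *m invmx U]mulmxA mulmxV // mulmx1.
  by [].
rewrite -{1}HA -mulmxA mxtrace_mulC -mulmxA.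
rewrite -{1}pp -mulmxA mxtrace_mulC Hp mxtrace_pid //.
Qed.


Definition i0 : 'I_3 := @Ordinal 3 0 isT.
Definition i1 : 'I_3 := @Ordinal 3 1 isT.
Definition i2 : 'I_3 := @Ordinal 3 2 isT.
Definition tA : S3 := tperm i0 i1.
Definition tB : S3 := tperm i0 i2.
Definition tC : S3 := tperm i1 i2.
Definition cc : S3 := (tA * tB)%g.
Definition cc' : S3 := (tB * tA)%g.

Definition T (k : 'I_3) : S3 :=
  if val k == 0%N then tA else if val k == 1%N then tB else tC.
Definition s3 (k : 'I_3) : 'I_3 :=
  if val k == 0%N then i1 else if val k == 1%N then i2 else i0.
Definition third (m k : 'I_3) : 'I_3 :=
  if (val m != 0%N) && (val k != 0%N) then i0
  else if (val m != 1%N) && (val k != 1%N) then i1 else i2.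
Definition pi (m k : 'I_3) : 'I_3 := if k == m then k else third m k.

Lemma tpE (x y z : 'I_3) : tperm x y z = if z == x then y else if z == y then x else z.
Proof. by rewrite permE. Qed.

Lemma eqpermE (s t : S3) : (s == t) = [&& s i0 == t i0, s i1 == t i1 & s i2 == t i2].
Proof.
apply/eqP/and3P => [-> //|[/eqP H0 /eqP H1 /eqP H2]].
apply/permP => [[[|[|[|//]]] Hi]].
- by rewrite (_ : Ordinal Hi = i0) //; apply: val_inj.
- by rewrite (_ : Ordinal Hi = i1) //; apply: val_inj.
- by rewrite (_ : Ordinal Hi = i2) //; apply: val_inj.
Qed.

Ltac ordcase k := case: k => [[|[|[|//]]] ?].
Ltac pcomp := rewrite ?eqpermE /T /cc /cc' /tA /tB /tC /= ?permM ?tpE /=.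

Lemma T_inj (i j : 'I_3) : (T i == T j) = (i == j).
Proof. by ordcase i; ordcase j; pcomp. Qed.

Lemma TT_1 (i j : 'I_3) : (T i * T j == 1)%g = (i == j).
Proof. by ordcase i; ordcase j; pcomp; rewrite ?perm1. Qed.

Lemma TT_c (i j : 'I_3) : (T i * T j == cc)%g = (j == s3 i).
Proof. by ordcase i; ordcase j; pcomp. Qed.

Lemma TT_c' (i j : 'I_3) : (T i * T j == cc')%g = (i == s3 j).
Proof. by ordcase i; ordcase j; pcomp. Qed.

Lemma T_conj (k m : 'I_3) : (T k ^ T m)%g = T (pi m k).
Proof.
apply/eqP; rewrite /conjg.
have -> : ((T m)^-1 = T m)%g by rewrite /T; case: ifP => _; [|case: ifP => _]; rewrite tpermV.
by ordcase k; ordcase m; pcomp.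
Qed.

Lemma S3_enum (g : S3) : g \in [:: 1; tA; tB; tC; cc; cc']%g.
Proof.
have U : uniq [:: 1; tA; tB; tC; cc; cc']%g.
  by rewrite /= !inE; pcomp; rewrite ?perm1 /=.
have Hc : #|[:: 1; tA; tB; tC; cc; cc']%g| = #|{: S3}|.
  by rewrite (card_uniqP U) card_Sn.
have := subset_cardP Hc; rewrite subset_predT => /(_ isT) /(_ g).
by rewrite inE => ->.
Qed.

Lemma odd_T (g : S3) : odd_perm g -> exists k, g = T k.
Proof.
have := S3_enum g; rewrite !inE => /or4P [/eqP->|/eqP->|/eqP->|/orP[/eqP->|/orP[/eqP->|//]]].
- by rewrite odd_perm1.
- by exists i0.
- by exists i1.
- by exists i2.
- by rewrite /cc odd_permM !odd_tperm.
- by move/eqP ->; rewrite /cc' odd_permM !odd_tperm.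
Qed.

Lemma pi_inv (m a : 'I_3) : pi m (pi m a) = a.
Proof. by apply/val_inj; ordcase m; ordcase a. Qed.

Lemma pi_eq (m a b : 'I_3) : (pi m a == pi m b) = (a == b).
Proof. by ordcase m; ordcase a; ordcase b. Qed.

Lemma pi_s3 (m a b : 'I_3) : (pi m a == s3 (pi m b)) = (b == s3 a).
Proof. by ordcase m; ordcase a; ordcase b. Qed.

Lemma pi_orbit (k j : 'I_3) : exists m, pi m k = j.
Proof.
exists (if j == k then k else third k j); apply/val_inj; by ordcase k; ordcase j.
Qed.

Lemma grade_split (i j : 'I_3) :
  ((i == j)%:R + (j == s3 i)%:R + (i == s3 j)%:R = 1 :> CC).
Proof. by ordcase i; ordcase j; rewrite /= ?addr0 ?add0r. Qed.

Lemma ord3_cases (i : 'I_3) : [\/ i = i0, i = i1 | i = i2].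
Proof.
case: i => [[|[|[|//]]] Hi]; [constructor 1|constructor 2|constructor 3]; exact: val_inj.
Qed.


Definition lin1 (u : 'rV[CC]_3) : nc := [seq (u 0 i, [:: i]) | i <- enum 'I_3].

Lemma ncmul_lin1 (u w : 'rV[CC]_3) : ncmul (lin1 u) (lin1 w) = ofTens (u^T *m w).
Proof.
rewrite /ncmul /lin1 /ofTens allpairs_mapl allpairs_mapr.
apply: eq_allpairs => i j /=; congr (_, _).
by rewrite !mxE big_ord1 !mxE.
Qed.

Lemma ncoef_one_l p w : ncoef (ncmul ncone p) w = ncoef p w.
Proof.
rewrite /ncmul /ncone /= cats0 /ncoef big_map; apply: eq_bigr => t _ /=.
by rewrite mul1r.
Qed.

Lemma ncmul_one_r p : ncmul p ncone = p.
Proof.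
elim: p => [|s p IH] //=; rewrite /ncmul /= in IH *.
by rewrite IH mulr1 cats0; case: s.
Qed.

Lemma ncoef_one_r p w : ncoef (ncmul p ncone) w = ncoef p w.
Proof. by rewrite ncmul_one_r. Qed.

Lemma ncoef_lin1 u i : ncoef (lin1 u) [:: i] = u 0 i.
Proof.
rewrite /ncoef /lin1 big_map /= big_enum_cond /=.
rewrite (big_pred1 i) // => j /=; by rewrite eqseq_cons andbT.
Qed.

Lemma mem_ncmul p q x : x \in ncmul p q ->
  exists s t, [/\ s \in p, t \in q & x.2 = s.2 ++ t.2].
Proof. by move/allpairsP => [[s t] [Hs Ht ->]]; exists s, t. Qed.

Lemma size_ofTens M x : x \in ofTens M -> size x.2 = 2.
Proof. by move/allpairsP => [[i j] [_ _ ->]]. Qed.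

Lemma ncoef_rel_deg1 (l : seq (nc * 'M[CC]_3 * nc)) i :
  ncoef (flatten [seq ncmul (ncmul t.1.1 (ofTens t.1.2)) t.2 | t <- l]) [:: i] = 0.
Proof.
rewrite /ncoef; apply: big1_seq => x /andP [/eqP Hx Hin].
exfalso.
have: (2 <= size x.2)%N.
  move/flattenP: Hin => [s /mapP [t _ ->] Hs].
  move/mem_ncmul: Hs => [a [b [Ha _ ->]]].
  move/mem_ncmul: Ha => [c [d [_ Hd ->]]].
  rewrite !size_cat (size_ofTens Hd); lia.
by rewrite Hx.
Qed.

Lemma rank1_not_domain (r : 'I_3 -> 'M[CC]_3) (u w : 'rV[CC]_3) :
  u != 0 -> w != 0 -> inR r (u^T *m w) -> ~ quad_domain r.
Proof.
move=> Hu Hw HR [_ Hdom].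
have Hpq : in_rel r (ncmul (lin1 u) (lin1 w)).
  exists [:: (ncone, u^T *m w, ncone)]; split.
    by move=> t; rewrite inE => /eqP -> /=.
  move=> x /=; rewrite cats0 ncoef_one_r ncoef_one_l.
  by rewrite ncmul_lin1.
have Hnot : forall v : 'rV[CC]_3, v != 0 -> ~ in_rel r (lin1 v).
  move=> v /rV0Pn [i Hi] [l [_ Hl]].
  move: (Hl [:: i]); rewrite ncoef_lin1 ncoef_rel_deg1 => Hv.
  by rewrite Hv eqxx in Hi.
by case: (Hdom _ _ Hpq) => H; [apply: (Hnot u) | apply: (Hnot w)].
Qed.


Definition zl (p : nc) : bool := all (fun t => t.1 == 0) p.

Lemma ncoef_zl p w : zl p -> ncoef p w = 0.
Proof.
move/allP => H; rewrite /ncoef big1_seq // => t /andP [_ Ht].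
by apply/eqP; apply: H.
Qed.

Lemma zl_flatten (s : seq nc) : (forall p, p \in s -> zl p) -> zl (flatten s).
Proof.
move=> H; apply/allP => t /flattenP [p Hp Ht].
by move/allP: (H p Hp); apply.
Qed.

Lemma zl_scale0 p : zl (ncscale 0 p).
Proof. by apply/allP => t /mapP [x _ ->] /=; rewrite mul0r. Qed.

Lemma zl_scale c p : zl p -> zl (ncscale c p).
Proof.
move/allP => H; apply/allP => t /mapP [x Hx ->] /=.
by rewrite (eqP (H x Hx)) mulr0.
Qed.

Lemma zl_ncact rho g p : zl p -> zl (ncact rho g p).
Proof.
move/allP => H; apply: zl_flatten => q /mapP [t Ht ->].
by rewrite (eqP (H t Ht)) zl_scale0.
Qed.

Lemma opw_zero (Ms : seq 'M[CC]_3) (w : seq 'I_3) :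
  size Ms = size w -> 0 \in Ms -> zl (opw Ms w).
Proof.
elim: Ms w => [|M Ms IH] [|i w] //= [Hs].
rewrite inE => H0; apply/allP => x /allpairsP [[j t] [_ Ht ->]] /=.
case/orP: H0 => [/eqP <-|H0]; first by rewrite mxE mul0r.
by move/allP: (IH w Hs H0) => /(_ t Ht) /eqP ->; rewrite mulr0.
Qed.

Lemma gseqs_size n ys : ys \in gseqs n -> size ys = n.
Proof.
elim: n ys => [|n IH] ys /=; first by rewrite inE => /eqP ->.
by move/allpairsP => [[x s] [_ Hs ->]] /=; rewrite (IH _ Hs).
Qed.

Lemma odd_prod (ys : seq S3) : odd_perm (\prod_(x <- ys) x)%g ->
  exists2 y, y \in ys & odd_perm y.
Proof.
elim: ys => [|y ys IH]; first by rewrite big_nil odd_perm1.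
rewrite big_cons odd_permM; case Hy: (odd_perm y) => /= H.
  by exists y; rewrite ?inE ?eqxx.
have [z Hz Hoz] := IH H; exists z => //; by rewrite inE Hz orbT.
Qed.

Lemma zl_ncproj (P : S3 -> 'M[CC]_3) z p :
  (forall t, odd_perm t -> P t = 0) -> odd_perm z -> zl (ncproj P z p).
Proof.
move=> HP Hz; apply: zl_flatten => q /mapP [t _ ->]; apply: zl_scale.
apply: zl_flatten => s /mapP [ys]; rewrite mem_filter => /andP [/eqP Hp Hys] ->.
apply: opw_zero; first by rewrite size_map (gseqs_size Hys).
move: Hz; rewrite -Hp => /odd_prod [y Hy Hoy].
by apply/mapP; exists y => //; rewrite HP.
Qed.

Definition Ie (u : DS3) : Prop := forall g h, ~~ odd_perm g -> u (g, h) = 0.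
Definition delta (p : S3 * S3) : DS3 := [ffun q => (q == p)%:R].

Lemma odd_conj3 (a b : S3) : odd_perm (a * b * a^-1)%g = odd_perm b.
Proof. by rewrite !odd_permM odd_permV; case: (odd_perm a); case: (odd_perm b). Qed.

Lemma Ie_hopf : hopf_ideal Ie.
Proof.
split.
- split; first by move=> g h _; rewrite ffunE.
  by move=> c u v Hu Hv g h Hg; rewrite !ffunE Hu // Hv // scaler0 addr0.
- move=> a u Hu; split=> g h Hg; rewrite ffunE /=.
    apply: big1 => q _; apply: big1 => q' _.
    case: ifP => // /and3P [/eqP H1 /eqP H2 _].
    case: q' H1 => g' h' /= H1.
    rewrite Hu ?mulr0 //; move: Hg; by rewrite -H2 H1 odd_conj3.
  apply: big1 => q _; apply: big1 => q' _.
  case: ifP => // /and3P [_ /eqP H2 _].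
  by case: q H2 => g' h' /= H2; rewrite Hu ?mul0r // H2.
- move=> u Hu.
  pose F := fun x : S3 * S3 * S3 =>
    dtens (u ((x.1.1 * x.1.2)%g, x.2) *: delta (x.1.1, x.2)) (delta (x.1.2, x.2)).
  exists #|{: S3 * S3 * S3}|.
  exists (fun k => u (((enum_val k).1.1 * (enum_val k).1.2)%g, (enum_val k).2)
            *: delta ((enum_val k).1.1, (enum_val k).2)).
  exists (fun k => delta ((enum_val k).1.2, (enum_val k).2)).
  split.
    move=> k; case: (enum_val k) => [[x y] h] /=.
    case Hxy: (odd_perm (x * y)%g); last first.
      left => g h' _; by rewrite !ffunE Hu ?Hxy // scale0r.
    move: Hxy; rewrite odd_permM; case Hx: (odd_perm x) => /= Hy.
      left => g h' Hg; rewrite !ffunE.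
      case: eqP => [[Eg _]|]; last by rewrite scaler0.
      by rewrite Eg Hx in Hg.
    right => g h' Hg; rewrite !ffunE.
    case: eqP => [[Eg _]|] //; by rewrite Eg Hy in Hg.
  rewrite [RHS](_ : _ = \sum_(x in {: S3 * S3 * S3}) F x); last by rewrite (big_enum_val F).
  apply/ffunP => [[[x1 h1] [x2 h2]]].
  rewrite sum_ffunE !ffunE /=.
  rewrite (bigD1 (x1, x2, h1)) //= big1 ?addr0.
    rewrite /F !ffunE /= !xpair_eqE !eqxx /= -[_ *: _]/(_ * _) mulr1.
    case: (eqVneq h1 h2) => [->|Hne]; first by rewrite ?eqxx ?mulr1.
    by rewrite mulr0.
  move=> [[x y] h] Hne; rewrite /F !ffunE /= !xpair_eqE -[_ *: _]/(_ * _).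
  case: (eqVneq x1 x) => [Ex|]; last by rewrite mulr0 mul0r.
  case: (eqVneq h1 h) => [Eh|]; last by rewrite andbF mulr0 mul0r.
  case: (eqVneq x2 y) => [Ey|]; last by rewrite mulr0.
  by rewrite -Ex -Ey -Eh eqxx in Hne.
- move=> u Hu; rewrite /dcounit big1 // => h _; by rewrite Hu // odd_perm1.
- move=> u Hu g h Hg; rewrite ffunE /= Hu //.
  by rewrite !odd_permM !odd_permV; move: Hg; case: (odd_perm g); case: (odd_perm h).
Qed.


Lemma exists_odd_P (r : 'I_3 -> 'M[CC]_3) (rho P : S3 -> 'M[CC]_3) :
  inner_faithful r rho P -> exists t, odd_perm t /\ P t != 0.
Proof.
move=> Hif.
case: (boolP [exists t, odd_perm t && (P t != 0)]).
  by move/existsP => [t /andP [H1 H2]]; exists t.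
rewrite negb_exists => /forallP HP.
have HP0 : forall t, odd_perm t -> P t = 0.
  by move=> t Ht; move: (HP t); rewrite Ht /= negbK => /eqP.
have Hann : forall (p : nc) (u : DS3), Ie u -> in_rel r (ncactD rho P p u).
  move=> p u Hu; exists [::]; split => // w.
  rewrite /ncoef big_nil -/(ncoef _ w) ncoef_zl //.
  apply: zl_flatten => s /mapP [q _ ->].
  case: (eqVneq (u q) 0) => [->|Hq]; first exact: zl_scale0.
  apply/zl_scale/zl_ncact/zl_ncproj => //.
  apply/negPn/negP => Hev; move: Hq; case: q Hev => g h /= Hev.
  by rewrite Hu // eqxx.
have Hu0 : Ie (delta (tA, 1%g)).
  move=> g h Hg; rewrite ffunE xpair_eqE.
  case: (eqVneq g tA) => [Eg|] //; by rewrite Eg odd_tperm in Hg.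
move: (Hif _ Ie_hopf Hann _ Hu0) => /ffunP /(_ (tA, 1%g)).
by rewrite !ffunE eqxx => /eqP; rewrite oner_eq0.
Qed.


Lemma standardize (rho P : S3 -> 'M[CC]_3) :
  DS3_module rho P -> (exists t, odd_perm t /\ P t != 0) ->
  exists Q : 'M[CC]_3, [/\ Q \in unitmx,
    (forall k, Q *m P (T k) *m invmx Q = delta_mx k k) &
    (forall x, (forall k, x != T k) -> Q *m P x *m invmx Q = 0)].
Proof.
move=> [Hr1 HrM HPP HPs HPg] [t [Hot Ht]].
have [k0 Ek0] := odd_T Hot; subst t.
have Hprop : forall k m, P (T k) != 0 -> P (T (pi m k)) != 0.
  move=> k m Hk; apply/negP => /eqP H0; move/eqP: Hk; apply.
  have := HPg (T k) (T m); rewrite T_conj H0 mulmx0 => /esym H.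
  have := congr1 (fun X => X *m rho (T m)^-1%g) H.
  by rewrite mul0mx -mulmxA -HrM mulgV Hr1 mulmx1.
have Hall : forall k, P (T k) != 0.
  by move=> k; have [m <-] := pi_orbit k0 k; apply: Hprop.
pose ik k := odflt i0 [pick i | row i (P (T k)) != 0].
pose v k := row (ik k) (P (T k)).
have Hv0 : forall k, v k != 0.
  move=> k; rewrite /v /ik; case: pickP => [i //|H] /=.
  exfalso; move/negP: (Hall k); apply; apply/eqP/row_matrixP => i.
  by move: (H i) => /negbFE /eqP ->; rewrite row0.
have TP : forall k j, (T k == T j) = (k == j) by move=> k j; rewrite T_inj.
have HvP : forall k j, v k *m P (T j) = if k == j then v k else 0.
  move=> k j; rewrite /v -row_mul HPP TP.
  by case: (k == j); rewrite ?row0.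
pose Q := \matrix_(k < 3) v k.
have HQu : Q \in unitmx.
  rewrite -row_free_unit; apply: inj_row_free => a Ha.
  apply/rowP => j; rewrite mxE.
  have := congr1 (fun X => X *m P (T j)) Ha.
  rewrite mul0mx (mulmx_sum_row a Q) mulmx_suml (bigD1 j) //= big1 => [|k Hk].
    rewrite addr0 -scalemxAl rowK HvP eqxx => /eqP.
    by rewrite scaler_eq0 (negbTE (Hv0 j)) orbF => /eqP.
  by rewrite -scalemxAl rowK HvP (negbTE Hk) scaler0.
exists Q; split => //.
  move=> k; apply: (canLR (mulmxK HQu)).
  apply/row_matrixP => i; rewrite !row_mul rowK HvP rowE mul_delta_mx_cond.
  case: (eqVneq i k) => [->|Hik]; first by rewrite mulr1n -rowE rowK.
  by rewrite mulr0n mul0mx.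
move=> x Hx; suff -> : Q *m P x = 0 by rewrite mul0mx.
apply/row_matrixP => i; rewrite row_mul rowK row0.
have <- : v i *m P (T i) = v i by rewrite HvP eqxx.
rewrite -mulmxA HPP; case: eqP => [E|_]; last by rewrite mulmx0.
by move: (Hx i); rewrite E eqxx.
Qed.

Section Transport.
Variable Q : 'M[CC]_3.
Hypothesis HQ : Q \in unitmx.
Let Qi := invmx Q.
Definition phiQ (M : 'M[CC]_3) := (invmx Q)^T *m M *m invmx Q.
Definition psiQ (M : 'M[CC]_3) := Q^T *m M *m Q.

Lemma QiQ : invmx Q *m Q = 1. Proof. exact: mulVmx. Qed.
Lemma QQi : Q *m invmx Q = 1. Proof. exact: mulmxV. Qed.
Lemma QiQT : (invmx Q)^T *m Q^T = 1. Proof. by rewrite -trmx_mul QQi trmx1. Qed.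
Lemma QQiT : Q^T *m (invmx Q)^T = 1. Proof. by rewrite -trmx_mul QiQ trmx1. Qed.

Lemma psi_phi M : psiQ (phiQ M) = M.
Proof. by rewrite /psiQ /phiQ !mulmxA QQiT mul1mx -mulmxA QiQ mulmx1. Qed.
Lemma phi_psi M : phiQ (psiQ M) = M.
Proof. by rewrite /psiQ /phiQ !mulmxA QiQT mul1mx -mulmxA QQi mulmx1. Qed.

Lemma phi_comb (r : 'I_3 -> 'M[CC]_3) (c : 'I_3 -> CC) :
  phiQ (\sum_(k < 3) c k *: r k) = \sum_(k < 3) c k *: phiQ (r k).
Proof.
rewrite /phiQ mulmx_sumr mulmx_suml; apply: eq_bigr => k _.
by rewrite -scalemxAr -scalemxAl.
Qed.

Lemma inR_phi (r : 'I_3 -> 'M[CC]_3) M :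
  inR (fun k => phiQ (r k)) M <-> inR r (psiQ M).
Proof.
split => [[c ->]|[c Hc]]; exists c.
  by rewrite -phi_comb psi_phi.
by rewrite -phi_comb -Hc phi_psi.
Qed.

Lemma transport (r : 'I_3 -> 'M[CC]_3) (rho P : S3 -> 'M[CC]_3) :
  lin_indep3 r -> DS3_module rho P -> R_submodule r rho P ->
  [/\ lin_indep3 (fun k => phiQ (r k)),
      DS3_module (fun g => Q *m rho g *m invmx Q) (fun x => Q *m P x *m invmx Q) &
      R_submodule (fun k => phiQ (r k)) (fun g => Q *m rho g *m invmx Q)
                  (fun x => Q *m P x *m invmx Q)].
Proof.
move=> Hlin [Hr1 HrM HPP HPs HPg] HR; split.
- move=> c Hc; apply: Hlin.
  by rewrite -[LHS]psi_phi phi_comb Hc /psiQ mulmx0 mul0mx.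
- split.
  + by rewrite Hr1 mulmx1 QQi.
  + move=> g h; rewrite HrM !mulmxA -[Q *m rho g *m invmx Q *m Q]mulmxA QiQ mulmx1.
    by [].
  + move=> x y; rewrite -[Q *m P x *m invmx Q *m _]mulmxA.
    rewrite !mulmxA -[Q *m P x *m invmx Q *m Q]mulmxA QiQ mulmx1 -[Q *m P x *m P y]mulmxA HPP.
    by case: (x == y); rewrite ?mulmx0 ?mul0mx.
  + by rewrite -mulmx_suml -mulmx_sumr HPs mulmx1 QQi.
  + move=> x g; rewrite !mulmxA -[Q *m P x *m invmx Q *m Q]mulmxA QiQ mulmx1.
    rewrite -[Q *m P x *m rho g *m invmx Q *m Q]mulmxA QiQ mulmx1.
    by rewrite -(mulmxA Q (P x) (rho g)) -(mulmxA Q (P x *m rho g)) HPg !mulmxA.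
- move=> M /inR_phi HM; have [H1 H2] := HR _ HM; split.
  + move=> g; apply/inR_phi.
    suff -> : psiQ ((Q *m rho g *m invmx Q)^T *m M *m (Q *m rho g *m invmx Q)) =
              (rho g)^T *m psiQ M *m rho g by apply: H1.
    by rewrite /psiQ !trmx_mul !mulmxA QQiT mul1mx -(mulmxA _ (invmx Q) Q) QiQ mulmx1.
  + move=> z; apply/inR_phi.
    suff -> : psiQ (\sum_x \sum_(y | (x * y)%g == z)
                 (Q *m P x *m invmx Q)^T *m M *m (Q *m P y *m invmx Q)) =
              \sum_x \sum_(y | (x * y)%g == z) (P x)^T *m psiQ M *m P y by apply: H2.
    rewrite /psiQ mulmx_sumr mulmx_suml; apply: eq_bigr => x _.
    rewrite mulmx_sumr mulmx_suml; apply: eq_bigr => y _.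
    by rewrite !trmx_mul !mulmxA QQiT mul1mx -(mulmxA _ (invmx Q) Q) QiQ mulmx1.
Qed.
End Transport.


Lemma alg_rank1 (Dv Fv Gv : 'I_3 -> CC) :
  (forall k, Dv k != 0) -> (forall k, Fv k != 0) -> (forall k, Gv k != 0) ->
  Fv i0 * Gv i0 * Dv i2 = Fv i1 * Gv i1 * Dv i0 ->
  Fv i0 * Gv i0 * Dv i2 = Fv i2 * Gv i2 * Dv i1 ->
  exists (al be : CC) (u w : 'rV[CC]_3), [/\ u != 0, w != 0 &
    forall i j, u 0 i * w 0 j = (i == j)%:R * Dv i + al * ((j == s3 i)%:R * Fv i)
                                + be * ((i == s3 j)%:R * Gv j)].
Proof.
move=> HD HF HG E1 E2.
set D0 := Dv i0 in E1 E2 *; set D1 := Dv i1 in E1 E2 *; set D2 := Dv i2 in E1 E2 *.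
set F0 := Fv i0 in E1 E2 *; set F1 := Fv i1 in E1 E2 *; set F2 := Fv i2 in E1 E2 *.
set G0 := Gv i0 in E1 E2 *; set G1 := Gv i1 in E1 E2 *; set G2 := Gv i2 in E1 E2 *.
have nD0 : D0 != 0 by apply: HD. have nD1 : D1 != 0 by apply: HD.
have nD2 : D2 != 0 by apply: HD.
have nF0 : F0 != 0 by apply: HF. have nF1 : F1 != 0 by apply: HF.
have nF2 : F2 != 0 by apply: HF. have nG0 : G0 != 0 by apply: HG.
pose X := D0 * D1 * D2 / (F0 * F1 * F2).
have nX : X != 0 by rewrite /X; apply: mulf_neq0; [rewrite !mulf_neq0 | rewrite invr_eq0 !mulf_neq0].
pose al := 3.-root X.
have Hal : al ^+ 3 = X by rewrite /al rootCK.
have nal : al != 0 by rewrite /al rootC_eq0.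
move: al Hal nal => al Hal nal.
have eD2 : D2 = al ^+ 3 * F0 * F1 * F2 / (D0 * D1).
  by rewrite Hal /X; field; rewrite ?nD0 ?nD1 ?nD2 ?nF0 ?nF1 ?nF2.
have eG1 : G1 = F0 * G0 * D2 / (F1 * D0) by rewrite E1; field; rewrite ?nD0 ?nD1 ?nD2 ?nF0 ?nF1 ?nF2.
have eG2 : G2 = F0 * G0 * D2 / (F2 * D1) by rewrite E2; field; rewrite ?nD0 ?nD1 ?nD2 ?nF0 ?nF1 ?nF2.
pose be := D0 * D1 / (al * F0 * G0).
pose w1 := al * F0. pose u1 := D1 / w1. pose w2 := al * F1 / u1. pose u2 := D2 / w2.
exists al, be, (\row_i (if val i == 0%N then 1 else if val i == 1%N then u1 else u2)),
  (\row_i (if val i == 0%N then D0 else if val i == 1%N then w1 else w2)).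
split.
- by apply/eqP => /matrixP /(_ 0 i0); rewrite !mxE /= => /eqP; rewrite oner_eq0.
- by apply/eqP => /matrixP /(_ 0 i0); rewrite !mxE /= => /eqP; rewrite (negbTE nD0).
- move=> i j; rewrite !mxE.
  case: (ord3_cases i) => ->; case: (ord3_cases j) => ->; rewrite /= ?mulr0 ?mul0r ?mulr1 ?mul1r ?addr0 ?add0r.
  all: rewrite -/D0 -/D1 -/D2 -/F0 -/F1 -/F2 -/G0 -/G1 -/G2.
  all: rewrite /u2 /w2 /u1 /w1 /be.
all: try (rewrite ?eG1 ?eG2 ?eD2).
all: field; by rewrite ?nD0 ?nD1 ?nF0 ?nF1 ?nF2 ?nG0 ?nal.

Qed.

Lemma ratio_id (Fab Gba Da Db Dpa Dpb Fpba Gpab ga gb l n n' : CC) :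
  ga * Da * ga = l * Dpa -> gb * Db * gb = l * Dpb ->
  ga * Fab * gb = n * Gpab -> gb * Gba * ga = n' * Fpba -> l * l = 1 -> n * n' = 1 ->
  Fab * Gba * Dpa * Dpb = Fpba * Gpab * Da * Db.
Proof.
move=> E1 E2 E3 E4 Hl Hn.
transitivity ((Fab * Gba * Dpa * Dpb) * (l * l)); first by rewrite Hl mulr1.
have -> : Fab * Gba * Dpa * Dpb * (l * l) = Fab * Gba * (l * Dpa) * (l * Dpb) by ring.
rewrite -E1 -E2.
have -> : Fab * Gba * (ga * Da * ga) * (gb * Db * gb) = (ga * Fab * gb) * (gb * Gba * ga) * Da * Db by ring.
rewrite E3 E4.
have -> : n * Gpab * (n' * Fpba) * Da * Db = (n * n') * (Fpba * Gpab * Da * Db) by ring.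
by rewrite Hn mul1r.
Qed.

Lemma pi00 : pi i0 i0 = i0. Proof. by apply/val_inj. Qed.
Lemma pi01 : pi i0 i1 = i2. Proof. by apply/val_inj. Qed.
Lemma pi02 : pi i0 i2 = i1. Proof. by apply/val_inj. Qed.
Lemma pi10 : pi i1 i0 = i2. Proof. by apply/val_inj. Qed.
Lemma pi11 : pi i1 i1 = i1. Proof. by apply/val_inj. Qed.
Lemma pi12 : pi i1 i2 = i0. Proof. by apply/val_inj. Qed.
Lemma s3_0 : s3 i0 = i1. Proof. by apply/val_inj. Qed.
Lemma s3_1 : s3 i1 = i2. Proof. by apply/val_inj. Qed.
Lemma s3_2 : s3 i2 = i0. Proof. by apply/val_inj. Qed.


Section Core.
Variables (r : 'I_3 -> 'M[CC]_3) (rho P : S3 -> 'M[CC]_3).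
Hypothesis Hlin : lin_indep3 r.
Hypothesis Hmod : DS3_module rho P.
Hypothesis HR : R_submodule r rho P.
Hypothesis HPT : forall k, P (T k) = delta_mx k k.
Hypothesis HP0 : forall x, (forall k, x != T k) -> P x = 0.

Lemma Pform x : P x = \matrix_(a, b) ((x == T a) && (a == b))%:R.
Proof.
case: (boolP [exists k, x == T k]) => [/existsP [k /eqP ->]|].
  rewrite HPT; apply/matrixP => a b; rewrite !mxE T_inj.
  by case: (eqVneq k a) => [->|Hka]; first by rewrite eq_sym.
rewrite negb_exists => /forallP H; rewrite HP0 => [|k]; last exact: H.
apply/matrixP => a b; rewrite !mxE.
by move: (H a) => /negbTE ->.
Qed.

Lemma PMP_entry x y M i j :
  ((P x)^T *m M *m P y) i j = ((x == T i) && (y == T j))%:R * M i j.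
Proof.
rewrite !mxE (bigD1 j) //= big1 => [|b Hb]; last first.
  by rewrite [P y]Pform !mxE (negbTE Hb) andbF mulr0.
rewrite addr0 !mxE (bigD1 i) //= big1 => [|a Ha]; last first.
  by rewrite [P x]Pform !mxE (negbTE Ha) andbF mul0r.
rewrite addr0 [P x]Pform [P y]Pform !mxE !eqxx !andbT.
by case: (x == T i); case: (y == T j); rewrite /= ?mulr1 ?mul1r ?mulr0 ?mul0r.
Qed.

Lemma proj_formula M z :
  \sum_(x : S3) \sum_(y : S3 | (x * y)%g == z) (P x)^T *m M *m P y =
  \matrix_(i, j) ((T i * T j == z)%g%:R * M i j).
Proof.
apply/matrixP => i j.
have inner : forall x : S3,
  (\sum_(y : S3 | (x * y)%g == z) (P x)^T *m M *m P y) i j =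
  (x == T i)%:R * ((T i * T j == z)%g%:R * M i j).
  move=> x; rewrite summxE big_mkcond (bigD1 (T j)) //= big1 => [|y Hy]; last first.
    by case: ifP => // _; rewrite PMP_entry (negbTE Hy) andbF mul0r.
  rewrite addr0 PMP_entry eqxx andbT.
  case: (eqVneq x (T i)) => [->|Hx]; last by case: ifP; rewrite !mul0r.
  by case: ifP; rewrite ?mul1r ?mul0r.
rewrite summxE (eq_bigr _ (fun x _ => inner x)) mxE.
rewrite (bigD1 (T i)) //= big1 => [|x Hx]; last by rewrite (negbTE Hx) mul0r.
by rewrite eqxx mul1r addr0.
Qed.

Definition Pe (M : 'M[CC]_3) := \matrix_(i, j) ((i == j)%:R * M i j).
Definition Pc (M : 'M[CC]_3) := \matrix_(i, j) ((j == s3 i)%:R * M i j).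
Definition Pc' (M : 'M[CC]_3) := \matrix_(i, j) ((i == s3 j)%:R * M i j).

Lemma inR_Pe M : inR r M -> inR r (Pe M).
Proof.
move/HR => [_ /(_ 1%g)]; rewrite proj_formula.
by congr inR; apply/matrixP => i j; rewrite !mxE TT_1.
Qed.
Lemma inR_Pc M : inR r M -> inR r (Pc M).
Proof.
move/HR => [_ /(_ cc)]; rewrite proj_formula.
by congr inR; apply/matrixP => i j; rewrite !mxE TT_c.
Qed.
Lemma inR_Pc' M : inR r M -> inR r (Pc' M).
Proof.
move/HR => [_ /(_ cc')]; rewrite proj_formula.
by congr inR; apply/matrixP => i j; rewrite !mxE TT_c'.
Qed.

Definition act (g : S3) (M : 'M[CC]_3) := (rho g)^T *m M *m rho g.
Lemma inR_act g M : inR r M -> inR r (act g M).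
Proof. by move/HR => [H _]; apply: H. Qed.

Lemma inR_add M N : inR r M -> inR r N -> inR r (M + N).
Proof.
move=> [c ->] [d ->]; exists (fun k => c k + d k).
by rewrite -big_split; apply: eq_bigr => k _; rewrite scalerDl.
Qed.
Lemma inR_scale a M : inR r M -> inR r (a *: M).
Proof.
move=> [c ->]; exists (fun k => a * c k).
by rewrite scaler_sumr; apply: eq_bigr => k _; rewrite scalerA.
Qed.

Lemma Pe_id M : Pe (Pe M) = Pe M.
Proof. by apply/matrixP => i j; rewrite !mxE mulrA -natrM mulnb andbb. Qed.
Lemma Pc_id M : Pc (Pc M) = Pc M.
Proof. by apply/matrixP => i j; rewrite !mxE mulrA -natrM mulnb andbb. Qed.
Lemma Pc'_id M : Pc' (Pc' M) = Pc' M.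
Proof. by apply/matrixP => i j; rewrite !mxE mulrA -natrM mulnb andbb. Qed.
Lemma P_split M : Pe M + Pc M + Pc' M = M.
Proof. by apply/matrixP => i j; rewrite !mxE -!mulrDl grade_split mul1r. Qed.

Lemma dXa (X : 'M[CC]_3) a b : (delta_mx a a *m X) a b = X a b.
Proof.
rewrite mxE (bigD1 a) //= big1 => [|k Hk]; last by rewrite mxE (negbTE Hk) andbF mul0r.
by rewrite mxE !eqxx mul1r addr0.
Qed.

Lemma Xdc (Y : 'M[CC]_3) i c j : (Y *m delta_mx c c) i j = Y i c * (c == j)%:R.
Proof.
rewrite mxE (bigD1 c) //= big1 => [|k Hk]; last by rewrite mxE (negbTE Hk) /= mulr0.
by rewrite mxE eqxx addr0 eq_sym.
Qed.

Lemma rho_mono m a j : rho (T m) a j = (j == pi m a)%:R * rho (T m) a (pi m a).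
Proof.
case: Hmod => _ _ _ _ HPg.
have := HPg (T a) (T m); rewrite T_conj !HPT => /matrixP /(_ a j).
rewrite Xdc !dXa => <-; by rewrite mulrC eq_sym.
Qed.

Lemma rho_sq m : rho (T m) *m rho (T m) = 1.
Proof.
case: Hmod => Hr1 HrM _ _ _.
by rewrite -HrM (eqP (_ : (T m * T m == 1)%g)) ?Hr1 // TT_1.
Qed.

Definition gam m a := rho (T m) a (pi m a).

Lemma act_entry m N a b : act (T m) N (pi m a) (pi m b) = gam m a * N a b * gam m b.
Proof.
rewrite /act !mxE (bigD1 b) //= big1 => [|b' Hb]; last first.
  by rewrite rho_mono pi_eq eq_sym (negbTE Hb) mul0r mulr0.
rewrite addr0 !mxE (bigD1 a) //= big1 => [|a' Ha]; last first.
  by rewrite !mxE rho_mono pi_eq eq_sym (negbTE Ha) mul0r mul0r.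
by rewrite addr0 !mxE /gam mulrC mulrA.
Qed.

Lemma entry_pi m (X Y : 'M[CC]_3) :
  (forall a b, X (pi m a) (pi m b) = Y (pi m a) (pi m b)) -> X = Y.
Proof. by move=> H; apply/matrixP => i j; rewrite -(pi_inv m i) -(pi_inv m j) H. Qed.

Lemma Pe_E M i j : Pe M i j = (i == j)%:R * M i j. Proof. by rewrite mxE. Qed.
Lemma Pc_E M i j : Pc M i j = (j == s3 i)%:R * M i j. Proof. by rewrite mxE. Qed.
Lemma Pc'_E M i j : Pc' M i j = (i == s3 j)%:R * M i j. Proof. by rewrite mxE. Qed.

Lemma act_Pe m N : act (T m) (Pe N) = Pe (act (T m) N).
Proof.
apply: (@entry_pi m) => a b; rewrite act_entry Pe_E Pe_E act_entry pi_eq.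
by ring.
Qed.
Lemma act_Pc m N : act (T m) (Pc N) = Pc' (act (T m) N).
Proof.
apply: (@entry_pi m) => a b; rewrite act_entry Pc_E Pc'_E act_entry pi_s3.
by ring.
Qed.
Lemma act_Pc' m N : act (T m) (Pc' N) = Pc (act (T m) N).
Proof.
apply: (@entry_pi m) => a b; rewrite act_entry Pc'_E Pc_E act_entry pi_s3.
by ring.
Qed.
Lemma act_act m N : act (T m) (act (T m) N) = N.
Proof.
by rewrite /act !mulmxA -trmx_mul rho_sq trmx1 mul1mx -mulmxA rho_sq mulmx1.
Qed.
Lemma act_scale m c N : act (T m) (c *: N) = c *: act (T m) N.
Proof. by rewrite /act -(scalemxAr c (rho (T m))^T N) -scalemxAl. Qed.


Definition comb (a : 'rV[CC]_3) : 'M[CC]_3 := \sum_(k < 3) a 0 k *: r k.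

Lemma combD a b : comb (a + b) = comb a + comb b.
Proof.
by rewrite /comb -big_split; apply: eq_bigr => k _; rewrite mxE scalerDl.
Qed.
Lemma combZ c a : comb (c *: a) = c *: comb a.
Proof.
by rewrite /comb scaler_sumr; apply: eq_bigr => k _; rewrite mxE scalerA.
Qed.
Lemma comb0 : comb 0 = 0.
Proof. by rewrite /comb big1 // => k _; rewrite mxE scale0r. Qed.

Lemma comb_inj a b : comb a = comb b -> a = b.
Proof.
move=> H; apply/rowP => k; apply/eqP; rewrite -subr_eq0; apply/eqP.
move: k; apply: (Hlin (c := fun k => a 0 k - b 0 k)).
rewrite (eq_bigr (fun k => a 0 k *: r k - b 0 k *: r k)); last first.
  by move=> j _; rewrite scalerBl.
by rewrite sumrB -/(comb a) -/(comb b) H subrr.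
Qed.

Lemma inR_comb M : inR r M -> exists a, M = comb a.
Proof.
move=> [c ->]; exists (\row_k c k).
by rewrite /comb; apply: eq_bigr => k _; rewrite mxE.
Qed.

Lemma comb_inR a : inR r (comb a).
Proof. by exists (fun k => a 0 k). Qed.

Lemma comb_unit k : comb (delta_mx 0 k) = r k.
Proof.
rewrite /comb (bigD1 k) //= big1 => [|j Hj]; last by rewrite mxE (negbTE Hj) scale0r.
by rewrite mxE !eqxx scale1r addr0.
Qed.

Lemma comb_sum (c : 'I_3 -> CC) (b : 'I_3 -> 'rV[CC]_3) :
  \sum_(k < 3) c k *: comb (b k) = comb (\sum_(k < 3) c k *: b k).
Proof.
rewrite /comb; under eq_bigr => k _ do rewrite scaler_sumr.
rewrite exchange_big /=; apply: eq_bigr => j _.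
rewrite summxE scaler_suml; apply: eq_bigr => k _.
by rewrite mxE scalerA.
Qed.

Lemma coef_mat (f : 'M[CC]_3 -> 'M[CC]_3) :
  (forall M, inR r M -> inR r (f M)) ->
  (forall (c : 'I_3 -> CC) (N : 'I_3 -> 'M[CC]_3),
      f (\sum_(k < 3) c k *: N k) = \sum_(k < 3) c k *: f (N k)) ->
  exists A : 'M[CC]_3, forall a, f (comb a) = comb (a *m A).
Proof.
move=> HfR Hf.
have : forall k, exists b : 'rV[CC]_3, f (r k) = comb b.
  by move=> k; apply: inR_comb; apply: HfR; rewrite -comb_unit; apply: comb_inR.
move/fin_all_exists => [b Hb].
exists (\matrix_k b k) => a.
rewrite /comb Hf -/(comb a) (eq_bigr (fun k => a 0 k *: comb (b k))); last first.
  by move=> k _; rewrite Hb.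
rewrite comb_sum mulmx_sum_row; congr comb; apply: eq_bigr => k _.
by rewrite rowK.
Qed.

Lemma mat_eq (X Y : 'M[CC]_3) : (forall a, comb (a *m X) = comb (a *m Y)) -> X = Y.
Proof.
move=> H; apply/row_matrixP => k; rewrite !rowE; apply: comb_inj; exact: H.
Qed.

Lemma Pe_lin (c : 'I_3 -> CC) (N : 'I_3 -> 'M[CC]_3) :
  Pe (\sum_(k < 3) c k *: N k) = \sum_(k < 3) c k *: Pe (N k).
Proof.
apply/matrixP => i j; rewrite !mxE !summxE mulr_sumr; apply: eq_bigr => k _.
by rewrite !mxE mulrCA.
Qed.
Lemma Pc_lin (c : 'I_3 -> CC) (N : 'I_3 -> 'M[CC]_3) :
  Pc (\sum_(k < 3) c k *: N k) = \sum_(k < 3) c k *: Pc (N k).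
Proof.
apply/matrixP => i j; rewrite !mxE !summxE mulr_sumr; apply: eq_bigr => k _.
by rewrite !mxE mulrCA.
Qed.
Lemma Pc'_lin (c : 'I_3 -> CC) (N : 'I_3 -> 'M[CC]_3) :
  Pc' (\sum_(k < 3) c k *: N k) = \sum_(k < 3) c k *: Pc' (N k).
Proof.
apply/matrixP => i j; rewrite !mxE !summxE mulr_sumr; apply: eq_bigr => k _.
by rewrite !mxE mulrCA.
Qed.
Lemma act_lin g (c : 'I_3 -> CC) (N : 'I_3 -> 'M[CC]_3) :
  act g (\sum_(k < 3) c k *: N k) = \sum_(k < 3) c k *: act g (N k).
Proof.
rewrite /act mulmx_sumr mulmx_suml; apply: eq_bigr => k _.
by rewrite -scalemxAr -scalemxAl.
Qed.

Lemma delta_neq0 (k : 'I_3) : (delta_mx 0 k : 'rV[CC]_3) != 0.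
Proof.
by apply/eqP => /matrixP /(_ 0 k); rewrite !mxE !eqxx => /eqP; rewrite oner_eq0.
Qed.

Lemma case_full (Ae : 'M[CC]_3) : (forall a, Pe (comb a) = comb (a *m Ae)) ->
  Ae *m Ae = Ae -> \rank Ae = 3%N ->
  exists u w : 'rV[CC]_3, [/\ u != 0, w != 0 & inR r (u^T *m w)].
Proof.
move=> HAe Hee Hre.
have uAe : Ae \in unitmx by rewrite -row_free_unit /row_free Hre.
have Ae1 : Ae = 1 by rewrite -(mulKmx uAe Ae) Hee mulVmx.
have Hdiag : forall a, Pe (comb a) = comb a by move=> a; rewrite HAe Ae1 mulmx1.
pose Dm := \matrix_(k, i) r k i i.
have Hc : forall a, comb a = \matrix_(i, j) ((i == j)%:R * (a *m Dm) 0 j).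
  move=> a; rewrite -Hdiag; apply/matrixP => i j; rewrite !mxE.
  case: (eqVneq i j) => [->|]; last by rewrite !mul0r.
  rewrite !mul1r summxE; apply: eq_bigr => k _; by rewrite !mxE.
have uDm : Dm \in unitmx.
  rewrite -row_free_unit; apply: inj_row_free => a Ha.
  apply: comb_inj; rewrite comb0 Hc Ha; apply/matrixP => i j; by rewrite !mxE mulr0.
pose a : 'rV[CC]_3 := delta_mx 0 i0 *m invmx Dm.
pose u0 : 'rV[CC]_3 := delta_mx 0 i0.
exists u0, u0; split; try exact: delta_neq0.
have -> : u0^T *m u0 = comb a.
  rewrite Hc /a /u0 mulmxKV // trmx_delta mul_delta_mx.
  apply/matrixP => i j; rewrite !mxE eqxx /=.
  case: (eqVneq i j) => [->|Hij]; first by rewrite mul1r andbb.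
  rewrite mul0r; case: (eqVneq i i0) => [Ei|] //=.
  by case: (eqVneq j i0) => [Ej|] //; move: Hij; rewrite Ei Ej eqxx.
exact: comb_inR.
Qed.


Lemma gen_line (f : 'M[CC]_3 -> 'M[CC]_3) (A : 'M[CC]_3) :
  (forall a, f (comb a) = comb (a *m A)) -> A *m A = A -> \rank A = 1%N ->
  exists D, [/\ inR r D, f D = D, D != 0 &
    forall M, inR r M -> f M = M -> exists l, M = l *: D].
Proof.
move=> HA HAA Hr.
have A0 : A != 0 by apply/eqP => A0; move: Hr; rewrite A0 mxrank0.
have [i Hi] : exists i, row i A != 0.
  case: (pickP (fun i => row i A != 0)) => [i Hi|H]; first by exists i.
  exfalso; move/eqP: A0; apply; apply/row_matrixP => i.
  by move: (H i) => /negbFE/eqP ->; rewrite row0.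
set a0 := row i A.
have a0A : a0 *m A = a0 by rewrite /a0 -row_mul HAA.
exists (comb a0); split.
- exact: comb_inR.
- by rewrite HA a0A.
- apply/eqP => H; move/eqP: Hi; apply; apply: comb_inj; by rewrite H comb0.
- move=> M HM HfM; have [a Ea] := inR_comb HM; subst M.
  have aA : a *m A = a by apply: comb_inj; rewrite -HA.
  have Hsub : (a <= A)%MS by rewrite -aA submxMl.
  have Ha0 : (a0 <= A)%MS by rewrite row_sub.
  have HA0 : (A <= a0)%MS by rewrite -(mxrank_leqif_sup Ha0).2 Hr rank_rV Hi.
  have /submxP [Dm ->] := submx_trans Hsub HA0.
  by exists (Dm 0 0); rewrite {1}[Dm]mx11_scalar mul_scalar_mx combZ.
Qed.

Lemma gam_neq0 m a : gam m a != 0.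
Proof.
apply/eqP => H; have := rho_sq m; move/matrixP/(_ a a).
rewrite !mxE eqxx (bigD1 (pi m a)) //= big1 ?addr0 => [|j Hj]; last first.
  by rewrite rho_mono (negbTE Hj) !mul0r.
by rewrite -/(gam m a) H mul0r => /eqP; rewrite eq_sym oner_eq0.
Qed.

Lemma case_one (Ae Ac : 'M[CC]_3) :
  (forall a, Pe (comb a) = comb (a *m Ae)) -> Ae *m Ae = Ae -> \rank Ae = 1%N ->
  (forall a, Pc (comb a) = comb (a *m Ac)) -> Ac *m Ac = Ac -> \rank Ac = 1%N ->
  exists u w : 'rV[CC]_3, [/\ u != 0, w != 0 & inR r (u^T *m w)].
Proof.
move=> HAe Hee Hre HAc Hcc Hrc.
have [D [DR DPe D0 Dl]] := gen_line HAe Hee Hre.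
have [F [FR FPc F0 Fl]] := gen_line HAc Hcc Hrc.
pose F' := act (T i0) F.
have F'R : inR r F' := inR_act _ FR.
have F'Pc' : Pc' F' = F' by rewrite /F' -act_Pc FPc.
have F'0 : F' != 0.
  apply/eqP => H; move/eqP: F0; apply.
  by rewrite -(act_act i0 F) -/F' H /act mulmx0 mul0mx.
have F'l : forall M, inR r M -> Pc' M = M -> exists l, M = l *: F'.
  move=> M HM HPM.
  have HH : Pc (act (T i0) M) = act (T i0) M by rewrite -act_Pc' HPM.
  have [l Hl] := Fl (act (T i0) M) (inR_act _ HM) HH.
  by exists l; rewrite -(act_act i0 M) Hl act_scale.
have rel : forall m, exists l n n', [/\ act (T m) D = l *: D, act (T m) F = n *: F',
    act (T m) F' = n' *: F, l * l = 1 & n * n' = 1].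
  move=> m.
  have H1 : Pe (act (T m) D) = act (T m) D by rewrite -act_Pe DPe.
  have H2 : Pc' (act (T m) F) = act (T m) F by rewrite -act_Pc FPc.
  have H3 : Pc (act (T m) F') = act (T m) F' by rewrite -act_Pc' F'Pc'.
  have [l Hl] := Dl _ (inR_act (T m) DR) H1.
  have [n Hn] := F'l _ (inR_act (T m) FR) H2.
  have [n' Hn'] := Fl _ (inR_act (T m) F'R) H3.
  exists l, n, n'; split => //.
    have := act_act m D; rewrite Hl act_scale Hl scalerA => /eqP.
    rewrite -subr_eq0 -{2}(scale1r D) -scalerBl scaler_eq0 (negbTE D0) orbF subr_eq0.
    by move/eqP.
  have := act_act m F; rewrite Hn act_scale Hn' scalerA => /eqP.
  rewrite -subr_eq0 -{2}(scale1r F) -scalerBl scaler_eq0 (negbTE F0) orbF subr_eq0.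
  by move/eqP.
have Drel : forall m, exists l, l * l = 1 /\ forall a,
    gam m a * D a a * gam m a = l * D (pi m a) (pi m a).
  move=> m; have [l [n [n' [Hl _ _ Hll _]]]] := rel m.
  by exists l; split => // a; rewrite -act_entry Hl mxE.
have Frel : forall m, exists n n', n * n' = 1 /\ forall a b,
    gam m a * F a b * gam m b = n * F' (pi m a) (pi m b) /\
    gam m b * F' b a * gam m a = n' * F (pi m b) (pi m a).
  move=> m; have [l [n [n' [_ Hn Hn' _ Hnn]]]] := rel m.
  by exists n, n'; split => // a b; rewrite -!act_entry Hn Hn' !mxE.
have Dnz : forall m a, D a a != 0 -> D (pi m a) (pi m a) != 0.
  move=> m a Ha; have [l [Hll Hl]] := Drel m; apply/eqP => H.
  move: (Hl a); rewrite H mulr0 => /eqP.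
  by rewrite !mulf_eq0 (negbTE (gam_neq0 m a)) (negbTE Ha).
have Fnz : forall m a b, F a b != 0 -> F' (pi m a) (pi m b) != 0.
  move=> m a b Ha; have [n [n' [_ Hn]]] := Frel m; apply/eqP => H.
  move: (Hn a b) => [+ _]; rewrite H mulr0 => /eqP.
  by rewrite !mulf_eq0 (negbTE (gam_neq0 m a)) (negbTE (gam_neq0 m b)) (negbTE Ha).
have Gnz : forall m a b, F' b a != 0 -> F (pi m b) (pi m a) != 0.
  move=> m a b Ha; have [n [n' [_ Hn]]] := Frel m; apply/eqP => H.
  move: (Hn a b) => [_ +]; rewrite H mulr0 => /eqP.
  by rewrite !mulf_eq0 (negbTE (gam_neq0 m a)) (negbTE (gam_neq0 m b)) (negbTE Ha).
have Dall : forall k, D k k != 0.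
  have [k Hk] : exists k, D k k != 0.
    case: (pickP (fun k => D k k != 0)) => [k Hk|H]; first by exists k.
    exfalso; move/eqP: D0; apply; rewrite -DPe; apply/matrixP => i j; rewrite !mxE.
    case: (eqVneq i j) => [->|]; last by rewrite mul0r.
    by move: (H j) => /negbFE/eqP ->; rewrite mulr0.
  have H01 := Dnz i0 i1; have H02 := Dnz i0 i2; have H10 := Dnz i1 i0; have H12 := Dnz i1 i2.
  rewrite ?pi01 ?pi02 ?pi10 ?pi12 in H01 H02 H10 H12.
  move=> j; case: (ord3_cases k) Hk => -> Hk; case: (ord3_cases j) => ->; auto.
have Fall : forall k, F k (s3 k) != 0 /\ F' (s3 k) k != 0.
  have [k Hk] : exists k, F k (s3 k) != 0.
    case: (pickP (fun k => F k (s3 k) != 0)) => [k Hk|H]; first by exists k.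
    exfalso; move/eqP: F0; apply; rewrite -FPc; apply/matrixP => i j; rewrite !mxE.
    case: (eqVneq j (s3 i)) => [->|]; last by rewrite mul0r.
    by move: (H i) => /negbFE/eqP ->; rewrite mulr0.
  have a1 := Fnz i0 i0 i1; have a2 := Gnz i1 i2 i0; have a3 := Fnz i0 i2 i0.
  have a4 := Gnz i1 i0 i1; have a5 := Fnz i0 i1 i2; have a6 := Gnz i1 i1 i2.
  rewrite ?pi00 ?pi01 ?pi02 ?pi10 ?pi11 ?pi12 in a1 a2 a3 a4 a5 a6.
  move=> j; rewrite ?s3_0 ?s3_1 ?s3_2.
  case: (ord3_cases k) Hk => -> Hk; rewrite ?s3_0 ?s3_1 ?s3_2 in Hk;
  case: (ord3_cases j) => ->; rewrite ?s3_0 ?s3_1 ?s3_2; split; auto 10.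
have ratio : forall m a b, F a b * F' b a * D (pi m a) (pi m a) * D (pi m b) (pi m b) =
    F (pi m b) (pi m a) * F' (pi m a) (pi m b) * D a a * D b b.
  move=> m a b; have [l [Hll Hl]] := Drel m; have [n [n' [Hnn Hn]]] := Frel m.
  have [H1 H2] := Hn a b.
  exact: (ratio_id (Hl a) (Hl b) H1 H2 Hll Hnn).
have R1 := ratio i0 i0 i1; have R2 := ratio i1 i0 i1.
rewrite ?pi00 ?pi01 ?pi10 ?pi11 in R1 R2.
have E1 : F i0 (s3 i0) * F' (s3 i0) i0 * D i2 i2 = F i1 (s3 i1) * F' (s3 i1) i1 * D i0 i0.
  rewrite s3_0 s3_1; apply: (mulIf (Dall i1)); exact: R2.
have E2 : F i0 (s3 i0) * F' (s3 i0) i0 * D i2 i2 = F i2 (s3 i2) * F' (s3 i2) i2 * D i1 i1.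
  rewrite s3_0 s3_2; apply: (mulIf (Dall i0)).
  transitivity (F i0 i1 * F' i1 i0 * D i0 i0 * D i2 i2); first by ring.
  by rewrite R1; ring.
have [al [be [u [w [Hu Hw Huw]]]]] :=
  @alg_rank1 (fun k => D k k) (fun k => F k (s3 k)) (fun k => F' (s3 k) k)
    Dall (fun k => proj1 (Fall k)) (fun k => proj2 (Fall k)) E1 E2.
exists u, w; split => //.
have Dij : forall i j, D i j = (i == j)%:R * D i i.
  move=> i j; rewrite -{1}DPe mxE; by case: (eqVneq i j) => [->|]; rewrite ?mul0r.
have Fij : forall i j, F i j = (j == s3 i)%:R * F i (s3 i).
  move=> i j; rewrite -{1}FPc mxE; by case: (eqVneq j (s3 i)) => [->|]; rewrite ?mul0r.
have F'ij : forall i j, F' i j = (i == s3 j)%:R * F' (s3 j) j.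
  move=> i j; rewrite -{1}F'Pc' mxE; by case: (eqVneq i (s3 j)) => [->|]; rewrite ?mul0r.
clearbody F'.
have -> : u^T *m w = D + al *: F + be *: F'.
  apply/matrixP => i j; rewrite !mxE big_ord1 !mxE Huw.
  by rewrite [D i j]Dij [F i j]Fij [F' i j]F'ij.
by apply: inR_add; [apply: inR_add => //; apply: inR_scale | apply: inR_scale].
Qed.



Lemma core_rank1 : exists u w : 'rV[CC]_3, [/\ u != 0, w != 0 & inR r (u^T *m w)].
Proof.
have [Ae HAe] := coef_mat inR_Pe Pe_lin.
have [Ac HAc] := coef_mat inR_Pc Pc_lin.
have [Ac' HAc'] := coef_mat inR_Pc' Pc'_lin.
have [As HAs] := coef_mat (@inR_act (T i0)) (@act_lin (T i0)).
have Hee : Ae *m Ae = Ae.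
  by apply: mat_eq => a; rewrite mulmxA -(HAe (a *m Ae)) -(HAe a) Pe_id.
have Hcc : Ac *m Ac = Ac.
  by apply: mat_eq => a; rewrite mulmxA -(HAc (a *m Ac)) -(HAc a) Pc_id.
have Hsplit : Ae + Ac + Ac' = 1.
  by apply: mat_eq => a; rewrite mulmx1 !mulmxDr !combD -HAe -HAc -HAc' P_split.
have Hss : As *m As = 1.
  by apply: mat_eq => a; rewrite mulmxA -(HAs (a *m As)) -(HAs a) act_act mulmx1.
have Hcs : Ac *m As = As *m Ac'.
  apply: mat_eq => a; rewrite !mulmxA -(HAs (a *m Ac)) -(HAc a) -(HAc' (a *m As)) -(HAs a).
  exact: act_Pc.
have Htr : \tr Ac' = \tr Ac.
  have -> : Ac' = As *m (Ac *m As) by rewrite Hcs mulmxA Hss mul1mx.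
  by rewrite mxtrace_mulC -mulmxA Hss mulmx1.
have Hrk : (\rank Ae + \rank Ac + \rank Ac = 3)%N.
  have := congr1 mxtrace Hsplit; rewrite !mxtraceD Htr mxtrace1 !mxtrace_idem // -!natrD.
  by move/eqP; rewrite eqr_nat => /eqP.
have : ((\rank Ae = 3 /\ \rank Ac = 0) \/ (\rank Ae = 1 /\ \rank Ac = 1))%N by lia.
case => [[H3 _]|[H1 H1']]; first exact: (case_full HAe Hee H3).
exact: (case_one HAe Hee H1 HAc Hcc H1').
Qed.
End Core.

Theorem mainTheorem18 (r : 'I_3 -> 'M[CC]_3) (rho P : S3 -> 'M[CC]_3) :
  lin_indep3 r ->
  DS3_module rho P ->
  R_submodule r rho P ->
  inner_faithful r rho P ->
  ~ quad_domain r.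
Proof.
move=> Hlin Hmod HR Hif.
have Hodd := exists_odd_P Hif.
have [Q [HQ HPT HP0]] := standardize Hmod Hodd.
have [Hlin' Hmod' HR'] := transport HQ Hlin Hmod HR.
have [u [w [Hu Hw Huw]]] := core_rank1 Hlin' Hmod' HR' HPT HP0.
apply: (@rank1_not_domain r (u *m Q) (w *m Q)).
- apply/eqP => H; move/eqP: Hu; apply; by rewrite -(mulmxK HQ u) H mul0mx.
- apply/eqP => H; move/eqP: Hw; apply; by rewrite -(mulmxK HQ w) H mul0mx.
- move/(inR_phi HQ): Huw; congr inR.
  by rewrite /psiQ trmx_mul !mulmxA.
Qed.
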